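(* In any execution of $\mathcal{U}$, suppose a process $p$ reads $(t(o), o, h(o))$ from $A$ at line 8 at time $T$ and $o$ is done at time $T$. If $p$ subsequently executes line 10 (in the same iteration), then the condition tested at line 10 is false.
   Context: Model: an asynchronous shared-memory system with possibly infinitely many processes, any of which may crash, communicating via atomic shared objects. A fetch-and-increment (F\&I) object stores an integer; F\&I$(C)$ atomically returns the current value and increments it. A generalized-compare-and-swap (GCAS) object $O$ stores a value and supports Read$(O)$ and GCAS$(c, O, v_1, v_2)$, which atomically does: if $c(\text{current value of } O, v_1)$ holds then set $O := v_2$ and return true, else return false. Tuples are compared componentwise for $=$; GCAS$(>, A, (t,-,-), v)$ succeeds iff the time field of $A$ is strictly greater than $t$. Implemented type $\mathcal{T} = (OP, RES, Q, \delta)$ with initial state $s_0$; a procedure $apply_{\mathcal{T}}(o,s)$ returns some $(s',r)$ with $(s,o,s',r)\in\delta$. $NULL$ is a value different from every response of $\mathcal{T}$, and $NOOP$ is a name different from every operation of $\mathcal{T}$. Algorithm $\mathcal{U}$: each process $p$ owns a GCAS object $H_p$ with fields $(time, response)$. Shared objects: F\&I object $C$, initially $1$; GCAS object $A$ with fields $(time, op, ptr)$, initially $(0, NOOP, h(NOOP))$, where $h(NOOP)$ is a pointer to an immutable location containing $(0,\perp)$; GCAS object $S$ with fields $(time, state, response, ptr)$, initially $(0, s_0, \perp, h(NOOP))$. Process $p$ performs operation $o$ by calling DoOp$(o)$: (1) DoOp$(o)$ invoked; (2) $t := $ F\&I$(C)$; (3) $H_p := (t, NULL)$; (4) while $H_p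 = (t, NULL)$ do: (5) $(t^*, s^*, r^*, roptr^* ) := S$; (6) GCAS$(=, *roptr^*, (t^*, NULL), (t^*, r^* ))$; (7) GCAS$(>, A, (t,-,-), (t, o, \&H_p))$; (8) $(t', o', roptr') := A$; (9) $(\hat t, \hat r) := *roptr'$; (10) if $(\hat t,\hat r) = (t', NULL)$ then (11) $(s', r') := apply_{\mathcal{T}}(o', s^* )$; (12) GCAS$(=, S, (t^*,s^*,r^*,roptr^* ), (t', s', r', roptr'))$; (13) else GCAS$(=, A, (t', o', roptr'), (t, o, \&H_p))$; end while; (14) return $H_p.response$. Notation: an ''operation'' $o$ means one invocation of DoOp$(o)$ (or the initial $NOOP$). $p(o)$ is the process executing it; $t(o)$ is the value returned by its F\&I at line 2, or $\infty$ if line 2 has not been executed; $h(o)$ is $H_{p(o)}$. For $NOOP$: $t(NOOP)=0$ and $h(NOOP)$ is the immutable location containing $(0,\perp)$. Operation $o$ is done at time $T$ if at some time $T'\le T$, $h(o) = (t(o), r)$ with $r \neq NULL$. *)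

(* Defs.v *)
From Stdlib Require Import Arith PeanoNat.
Set Implicit Arguments.

Section AlgU.
Variables (OP RES Q : Type).

(* response-field values: NULL, the initial "bottom", or a response of T *)
Inductive rv := RNull | RBot | RVal (r : RES).
Inductive opn := NOOP | Op (o : OP).
(* pointers: h(NOOP) (immutable location) or &H_q for process q *)
Inductive ptr := PNoop | PH (q : nat).

(* program counters of a process, carrying its local variables.
   AtK = next line to execute is K; fields: o t t* s* r* roptr* t' o' roptr' ... *)
Inductive pcs :=
| Idle
| At2 (o : OP)
| At3 (o : OP) (t : nat)
| At4 (o : OP) (t : nat)
| At5 (o : OP) (t : nat)
| At6 (o : OP) (t ts : nat) (ss : Q) (rs : rv) (ps : ptr)
| At7 (o : OP) (t ts : nat) (ss : Q) (rs : rv) (ps : ptr)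
| At8 (o : OP) (t ts : nat) (ss : Q) (rs : rv) (ps : ptr)
| At9 (o : OP) (t ts : nat) (ss : Q) (rs : rv) (ps : ptr) (t1 : nat) (o1 : opn) (p1 : ptr)
| At10 (o : OP) (t ts : nat) (ss : Q) (rs : rv) (ps : ptr) (t1 : nat) (o1 : opn) (p1 : ptr)
       (th : nat) (rh : rv)
| At11 (o : OP) (t ts : nat) (ss : Q) (rs : rv) (ps : ptr) (t1 : nat) (o1 : opn) (p1 : ptr)
| At12 (o : OP) (t ts : nat) (ss : Q) (rs : rv) (ps : ptr) (t1 : nat) (o1 : opn) (p1 : ptr)
       (sn : Q) (rn : RES)
| At13 (o : OP) (t ts : nat) (ss : Q) (rs : rv) (ps : ptr) (t1 : nat) (o1 : opn) (p1 : ptr)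
| At14 (o : OP) (t : nat).

(* line labels of atomic steps; line 10 is split by the outcome of its test *)
Inductive line := L1 | L2 | L3 | L4 | L5 | L6 | L7 | L8 | L9 | L10T | L10F
  | L11 | L12 | L13 | L14.

Record config := mkConfig {
  cC : nat;
  cA : nat * opn * ptr;
  cS : nat * Q * rv * ptr;
  cH : nat -> nat * rv;
  cpc : nat -> pcs }.

Definition derefH (H : nat -> nat * rv) (x : ptr) : nat * rv :=
  match x with PNoop => (0, RBot) | PH q => H q end.
Definition updH (H : nat -> nat * rv) (q : nat) (v : nat * rv) :=
  fun r => if Nat.eqb r q then v else H r.
(* writing through h(NOOP) has no effect: that location is immutable *)
Definition writeP (H : nat -> nat * rv) (x : ptr) (v : nat * rv) :=
  match x with PNoop => H | PH q => updH H q v end.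

Definition set_pc (c : config) (p : nat) (s : pcs) : config :=
  mkConfig (cC c) (cA c) (cS c) (cH c) (fun q => if Nat.eqb q p then s else cpc c q).
Definition set_C (c : config) n := mkConfig n (cA c) (cS c) (cH c) (cpc c).
Definition set_A (c : config) a := mkConfig (cC c) a (cS c) (cH c) (cpc c).
Definition set_S (c : config) s := mkConfig (cC c) (cA c) s (cH c) (cpc c).
Definition set_H (c : config) h := mkConfig (cC c) (cA c) (cS c) h (cpc c).

Variable apply : OP -> Q -> Q * RES.
Variable s0 : Q.

Definition init : config :=
  mkConfig 1 (0, NOOP, PNoop) (0, s0, RBot, PNoop) (fun _ => (0, RBot)) (fun _ => Idle).

Inductive step (p : nat) : line -> config -> config -> Prop :=
| st1 c o : cpc c p = Idle -> step p L1 c (set_pc c p (At2 o))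
| st2 c o : cpc c p = At2 o ->
    step p L2 c (set_pc (set_C c (S (cC c))) p (At3 o (cC c)))
| st3 c o t : cpc c p = At3 o t ->
    step p L3 c (set_pc (set_H c (updH (cH c) p (t, RNull))) p (At4 o t))
| st4_in c o t : cpc c p = At4 o t -> cH c p = (t, RNull) ->
    step p L4 c (set_pc c p (At5 o t))
| st4_out c o t : cpc c p = At4 o t -> cH c p <> (t, RNull) ->
    step p L4 c (set_pc c p (At14 o t))
| st5 c o t ts ss rs ps : cpc c p = At5 o t -> cS c = (ts, ss, rs, ps) ->
    step p L5 c (set_pc c p (At6 o t ts ss rs ps))
| st6 c o t ts ss rs ps H' : cpc c p = At6 o t ts ss rs ps ->
    ((derefH (cH c) ps = (ts, RNull) /\ H' = writeP (cH c) ps (ts, rs)) \/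
     (derefH (cH c) ps <> (ts, RNull) /\ H' = cH c)) ->
    step p L6 c (set_pc (set_H c H') p (At7 o t ts ss rs ps))
| st7 c o t ts ss rs ps A' : cpc c p = At7 o t ts ss rs ps ->
    ((t < fst (fst (cA c)) /\ A' = (t, Op o, PH p)) \/
     (fst (fst (cA c)) <= t /\ A' = cA c)) ->
    step p L7 c (set_pc (set_A c A') p (At8 o t ts ss rs ps))
| st8 c o t ts ss rs ps t1 o1 p1 : cpc c p = At8 o t ts ss rs ps ->
    cA c = (t1, o1, p1) ->
    step p L8 c (set_pc c p (At9 o t ts ss rs ps t1 o1 p1))
| st9 c o t ts ss rs ps t1 o1 p1 th rh : cpc c p = At9 o t ts ss rs ps t1 o1 p1 ->
    derefH (cH c) p1 = (th, rh) ->
    step p L9 c (set_pc c p (At10 o t ts ss rs ps t1 o1 p1 th rh))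
| st10T c o t ts ss rs ps t1 o1 p1 th rh :
    cpc c p = At10 o t ts ss rs ps t1 o1 p1 th rh -> (th, rh) = (t1, RNull) ->
    step p L10T c (set_pc c p (At11 o t ts ss rs ps t1 o1 p1))
| st10F c o t ts ss rs ps t1 o1 p1 th rh :
    cpc c p = At10 o t ts ss rs ps t1 o1 p1 th rh -> (th, rh) <> (t1, RNull) ->
    step p L10F c (set_pc c p (At13 o t ts ss rs ps t1 o1 p1))
| st11 c o t ts ss rs ps t1 x p1 :
    cpc c p = At11 o t ts ss rs ps t1 (Op x) p1 ->
    step p L11 c (set_pc c p (At12 o t ts ss rs ps t1 (Op x) p1
                               (fst (apply x ss)) (snd (apply x ss))))
| st12 c o t ts ss rs ps t1 o1 p1 sn rn S' :
    cpc c p = At12 o t ts ss rs ps t1 o1 p1 sn rn ->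
    ((cS c = (ts, ss, rs, ps) /\ S' = (t1, sn, RVal rn, p1)) \/
     (cS c <> (ts, ss, rs, ps) /\ S' = cS c)) ->
    step p L12 c (set_pc (set_S c S') p (At4 o t))
| st13 c o t ts ss rs ps t1 o1 p1 A' :
    cpc c p = At13 o t ts ss rs ps t1 o1 p1 ->
    ((cA c = (t1, o1, p1) /\ A' = (t, Op o, PH p)) \/
     (cA c <> (t1, o1, p1) /\ A' = cA c)) ->
    step p L13 c (set_pc (set_A c A') p (At4 o t))
| st14 c o t : cpc c p = At14 o t -> step p L14 c (set_pc c p Idle).

(* An execution: c i is the configuration at time i; sch i is the atomic step
   taken at time i (None = nothing happens, allowing finite executions). *)
Definition execution (c : nat -> config) (sch : nat -> option (nat * line)) : Prop :=
  c 0 = init /\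
  forall i, match sch i with
            | None => c (S i) = c i
            | Some (p, l) => step p l (c i) (c (S i))
            end.

(* operations: the initial NOOP, or the invocation of DoOp(x) by process q
   whose F&I at line 2 returned t *)
Inductive operation := NoopOp | RealOp (q : nat) (t : nat) (x : OP).

Definition is_operation (c : nat -> config) (sch : nat -> option (nat * line))
  (o : operation) : Prop :=
  match o with
  | NoopOp => True
  | RealOp q t x => exists i, sch i = Some (q, L2) /\ cpc (c i) q = At2 x /\ cC (c i) = t
  end.

Definition top (o : operation) : nat := match o with NoopOp => 0 | RealOp _ t _ => t end.
Definition Aval (o : operation) : nat * opn * ptr :=
  match o with NoopOp => (0, NOOP, PNoop) | RealOp q t x => (t, Op x, PH q) end.
Definition hval (cf : config) (o : operation) : nat * rv :=
  match o with NoopOp => (0, RBot) | RealOp q _ _ => cH cf q end.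

Definition done (c : nat -> config) (o : operation) (T : nat) : Prop :=
  exists T' r, T' <= T /\ hval (c T') o = (top o, r) /\ r <> RNull.

End AlgU.

(* Main.v *)
Require Import Defs.
From Stdlib Require Import Arith PeanoNat Lia.

Lemma line_eq_dec (a b : line) : {a = b} + {a <> b}.
Proof. decide equality. Qed.

Set Implicit Arguments.
Section Aux.
Variables (OP RES Q : Type).

Definition Inv (c : config OP RES Q) : Prop :=
  (forall q, fst (cH c q) < cC c) /\
  (forall q x t', cpc c q = At3 RES Q x t' -> fst (cH c q) < t' /\ t' < cC c).

Lemma writeP_fst (H : nat -> nat * rv RES) ps ts rs :
  derefH H ps = (ts, RNull RES) -> forall q, fst (writeP H ps (ts, rs) q) = fst (H q).
Proof.
  destruct ps as [|q0]; simpl; intros Hd q; auto.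
  unfold updH. destruct (Nat.eqb q q0) eqn:E; auto.
  apply Nat.eqb_eq in E; subst. rewrite Hd. reflexivity.
Qed.

Lemma step_H_fst p l (c c' : config OP RES Q) apply :
  step apply p l c c' -> l <> L3 -> forall q, fst (cH c' q) = fst (cH c q).
Proof.
  intros Hs Hl q; inversion Hs; subst; unfold set_pc, set_C, set_A, set_S, set_H in *; cbn; auto; try congruence.
  destruct H0 as [[Hd He]|[_ He]]; subst; auto. apply writeP_fst; auto.
Qed.

Lemma step_pc_other p l (c c' : config OP RES Q) apply q :
  step apply p l c c' -> q <> p -> cpc c' q = cpc c q.
Proof.
  intros Hs Hq; inversion Hs; subst; unfold set_pc, set_C, set_A, set_S, set_H in *; cbn;
  destruct (Nat.eqb q p) eqn:E; auto; apply Nat.eqb_eq in E; congruence.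
Qed.

Lemma step_C p l (c c' : config OP RES Q) apply :
  step apply p l c c' -> l <> L2 -> cC c' = cC c.
Proof. intros Hs Hl; inversion Hs; subst; unfold set_pc, set_C, set_A, set_S, set_H in *; cbn; auto; congruence. Qed.

Lemma step_Inv p l (c c' : config OP RES Q) apply :
  step apply p l c c' -> Inv c -> Inv c'.
Proof.
  unfold Inv; intros Hs [I1 I2].
  destruct (line_eq_dec l L2) as [->|H2]; [|destruct (line_eq_dec l L3) as [->|H3]].
  - inversion Hs; subst; unfold set_pc, set_C, set_A, set_S, set_H in *; cbn. split.
    + intros q. specialize (I1 q). lia.
    + intros q x t'. destruct (Nat.eqb q p) eqn:E.
      * intros Heq; inversion Heq; subst. apply Nat.eqb_eq in E; subst.
        specialize (I1 p); lia.
      * intros Hc. destruct (I2 q x t' Hc); lia.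
  - inversion Hs; subst; unfold set_pc, set_C, set_A, set_S, set_H in *; cbn. destruct (I2 p o t H) as [_ Ht]. split.
    + intros q. unfold updH. destruct (Nat.eqb q p); simpl; auto.
    + intros q x t'. unfold updH. destruct (Nat.eqb q p) eqn:E.
      * discriminate.
      * apply I2.
  - pose proof (step_H_fst Hs H3) as HF. pose proof (step_C Hs H2) as HC.
    split.
    + intros q. rewrite HF, HC. auto.
    + intros q x t' Hc. rewrite HF, HC.
      destruct (Nat.eq_dec q p) as [->|Hn].
      * inversion Hs; subst; unfold set_pc, set_C, set_A, set_S, set_H in *; cbn in Hc; cbn in Hc; rewrite ?Nat.eqb_refl in Hc; first [congruence | discriminate].
      * rewrite (step_pc_other Hs Hn) in Hc. eauto.
Qed.

Definition Pq (q t : nat) (c : config OP RES Q) : Prop :=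
  t <= fst (cH c q) /\ cH c q <> (t, RNull RES).

Lemma step_Pq p l (c c' : config OP RES Q) apply q t :
  step apply p l c c' -> Inv c -> Pq q t c -> Pq q t c'.
Proof.
  unfold Pq; intros Hs [I1 I2] [P1 P2].
  inversion Hs; subst; unfold set_pc, set_C, set_A, set_S, set_H in *; cbn; try (split; assumption).
  - unfold updH. destruct (Nat.eqb q p) eqn:E.
    + apply Nat.eqb_eq in E; subst. destruct (I2 p o t0 H) as [Hl _].
      split; simpl; [lia|]. intros Heq; inversion Heq; lia.
    + split; assumption.
  - destruct H0 as [[Hd He]|[_ He]]; subst; [|split; assumption].
    destruct ps as [|q0]; simpl in *; [split; assumption|].
    unfold updH. destruct (Nat.eqb q q0) eqn:E; [|split; assumption].
    apply Nat.eqb_eq in E; subst. rewrite Hd in P1, P2. simpl in P1.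
    split; simpl; auto. intros Heq; inversion Heq; subst; congruence.
Qed.

End Aux.

Lemma exec_Inv OP RES Q (apply : OP -> Q -> Q * RES) s0 c sch :
  execution apply s0 c sch -> forall n, Inv (c n).
Proof.
  intros [H0 Hst] n; induction n.
  - rewrite H0. split; simpl; [intros; lia| intros; discriminate].
  - specialize (Hst n). destruct (sch n) as [[p l]|].
    + eapply step_Inv; eauto.
    + rewrite Hst; auto.
Qed.

Lemma exec_Pq OP RES Q (apply : OP -> Q -> Q * RES) s0 c sch q t a :
  execution apply s0 c sch -> Pq q t (c a) -> forall n, Pq q t (c (a + n)).
Proof.
  intros He HP n; pose proof (exec_Inv He) as HI; induction n.
  - rewrite Nat.add_0_r; auto.
  - rewrite Nat.add_succ_r. destruct He as [H0 Hst]. specialize (Hst (a + n)).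
    destruct (sch (a + n)) as [[p l]|].
    + eapply step_Pq; [exact Hst| apply HI | exact IHn].
    + rewrite Hst; auto.
Qed.

Lemma exec_pc_frame OP RES Q (apply : OP -> Q -> Q * RES) s0 c sch p a :
  execution apply s0 c sch -> forall n,
  (forall i l', a <= i -> i < a + n -> sch i <> Some (p, l')) ->
  cpc (c (a + n)) p = cpc (c a) p.
Proof.
  intros He n; induction n; intros Hn.
  - rewrite Nat.add_0_r; auto.
  - rewrite Nat.add_succ_r. destruct He as [H0 Hst]. specialize (Hst (a + n)).
    rewrite <- IHn by (intros; apply Hn; lia).
    destruct (sch (a + n)) as [[p' l]|] eqn:Es.
    + destruct (Nat.eq_dec p p') as [->|Hne].
      * exfalso; eapply (Hn (a + n) l); [lia|lia|auto].
      * eapply step_pc_other; eauto.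
    + rewrite Hst; auto.
Qed.

Theorem mainTheorem9 (OP RES Q : Type) (delta : Q -> OP -> Q -> RES -> Prop)
  (s0 : Q) (apply : OP -> Q -> Q * RES)
  (apply_spec : forall x s, delta s x (fst (apply x s)) (snd (apply x s)))
  (c : nat -> config OP RES Q) (sch : nat -> option (nat * line))
  (o : operation OP) (p T T1 T2 : nat) (l : line) :
  execution apply s0 c sch ->
  is_operation c sch o ->
  sch T = Some (p, L8) ->
  cA (c T) = Aval o ->
  done c o T ->
  T < T1 -> T1 < T2 ->
  sch T1 = Some (p, L9) ->
  sch T2 = Some (p, l) -> (l = L10T \/ l = L10F) ->
  (forall i l', T < i -> i < T2 -> i <> T1 -> sch i <> Some (p, l')) ->
  l = L10F.
Proof.
  intros He _ HT HA Hdone HT1 HT2 Hs1 Hs2 Hl Hno.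
  destruct Hl as [Hl|Hl]; subst l; [exfalso|reflexivity].
  pose proof He as [_ Hst].
  pose proof (Hst T) as S8. rewrite HT in S8.
  pose proof (Hst T1) as S9. rewrite Hs1 in S9.
  pose proof (Hst T2) as S10. rewrite Hs2 in S10.
  inversion S8 as [| | | | | | | | c0 o0 t ts ss rs ps t1 o1 p1 Hpc8 HA8 | | | | | | |]; subst.
  assert (F1 : cpc (c T1) p = cpc (c (S T)) p).
  { replace T1 with (S T + (T1 - S T)) by lia. apply (exec_pc_frame He).
    intros i l' Hi1 Hi2. apply Hno; lia. }
  match goal with Hx : set_pc _ _ _ = c (S T) |- _ => rewrite <- Hx in F1 end. cbn in F1. rewrite Nat.eqb_refl in F1.
  inversion S9 as [| | | | | | | | | c0 o2 t2 ts2 ss2 rs2 ps2 t12 o12 p12 th rh Hpc9 Hd9 | | | | | |]; subst.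
  rewrite Hpc9 in F1. inversion F1; subst.
  assert (F2 : cpc (c T2) p = cpc (c (S T1)) p).
  { replace T2 with (S T1 + (T2 - S T1)) by lia. apply (exec_pc_frame He).
    intros i l' Hi1 Hi2. apply Hno; lia. }
  match goal with Hx : set_pc _ _ _ = c (S T1) |- _ => rewrite <- Hx in F2 end. cbn in F2. rewrite Nat.eqb_refl in F2.
  inversion S10 as [| | | | | | | | | | c0 o3 t3 ts3 ss3 rs3 ps3 t13 o13 p13 th3 rh3 Hpc10 Heq10 | | | | |]; subst.
  rewrite Hpc10 in F2. inversion F2; subst.
  inversion Heq10; subst.
  destruct o as [|q tq x]; cbn in HA; rewrite HA in HA8; inversion HA8; subst.
  - cbn in Hd9. inversion Hd9.
  - cbn in Hd9. destruct Hdone as [T' [r [HT' [Hv Hr]]]]. cbn in Hv.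
    match type of Hv with cH _ ?qq = (?tt, _) =>
    assert (HP : Pq qq tt (c T')) by (unfold Pq; rewrite Hv; cbn; split; [lia|congruence]) end.
    assert (HP1 : Pq q t1 (c (T' + (T1 - T')))) by (eapply exec_Pq; eauto).
    replace (T' + (T1 - T')) with T1 in HP1 by lia.
    destruct HP1 as [_ HP1]. apply HP1. exact Hd9.
Qed.
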